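(* Let $S=(N,M_0)$ be any Petri net system and $S^\Theta=(N^\Theta,M_0^\Theta)$ the system obtained from $S$ by the transformation $\Theta$. Then: (1) If $S$ is a 1S system then $S^\Theta$ is a 1S system; if $S$ is homogeneous then $S^\Theta$ is homogeneous; if $S$ is an H1S-WMG$_\le$ then $S^\Theta$ is an H1S-WMG$_\le$; if $S$ is a strongly connected H1S-WMG$_\le$ whose shared place deletion (if any) yields a strongly connected WMG$_\le$, then $S^\Theta$ also has these properties. (2) For each sequence $\alpha$ feasible in $S$, the expanded sequence $\theta(\alpha)$ is feasible in $S^\Theta$. (3) For each sequence $\beta'$ feasible in $S^\Theta$, the reduced sequence $\beta=\hat\theta(\beta')$ is also feasible in $S^\Theta$, and there is a sequence $\alpha$ feasible in $S$ such that $\theta(\alpha)$ is feasible in $S^\Theta$ and $\mathbf{P}(\theta(\alpha))=\mathbf{P}(\beta)$. (4) If each place of $S$ has a (finite) structural bound, then each place of $S^\Theta$ has a (finite) structural bound. (5) $S^\Theta$ is deadlockable iff $S$ is deadlockable. (6) $S^\Theta$ is live iff $S$ is live.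
   Context: A Petri net is $N=(P,T,W)$ with finite disjoint sets $P$, $T$ and weights $W:(P\times T)\cup(T\times P)\to\mathbb{N}$; incidence matrix $I(p,t)=W(t,p)-W(p,t)$; ${}^\bullet n=\{n':W(n',n)>0\}$, $n^\bullet=\{n':W(n,n')>0\}$. Transition $t$ is enabled at $M$ if $M(p)\ge W(p,t)$ for all $p$; firing yields $M+I[\cdot,t]$; $\mathbf{P}(\sigma)$ is the Parikh vector. A system is live if for every transition $t$ and every reachable marking $M'$ some marking reachable from $M'$ enables $t$; it is deadlockable if some reachable marking enables no transition. A place is shared if it has at least two outputs; 1S means at most one shared place; homogeneous means for each place all its output weights are equal; H1S-WMG$_\le$: homogeneous, at most one shared place, and deleting the shared place (if any) with its arcs, keeping all transitions, yields a net whose places each have at most one input and at most one output. Strongly connected refers to the bipartite graph on $P\cup T$ with arcs $(x,y)$ for $W(x,y)>0$. The structural bound of place $p$ is $SB(p,S)=\max\{M(p): M\in\mathbb{N}^P, \exists Y\in\mathbb{N}^T, M=M_0+I\cdot Y\}$ when finite. Transformation $\Theta$: start from $(N,M_0)$; for each pair $(p,t)$ of the original net $N$ with $p^\bullet=\{t\}$ and $|{}^\bullet t|\ge 2$, add two places $p_a^{(p,t)}$ (initial marking $0$) and $p_b^{(p,t)}$ (initial marking $1$), a transition $t_p^{(p,t)}$, arcs with $W(p,t_p^{(p,t)})=W(p,t)$ and $W(t_p^{(p,t)},p_a^{(p,t)})=W(p_a^{(p,t)},t)=W(t,p_b^{(p,t)})=W(p_b^{(p,t)},t_p^{(p,t)})=1$,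 and remove the arc $(p,t)$. Let $NewTrans$ be the set of added transitions. For a transition $t$ of $N$, let $NewTransPre(t)=NewTrans\cap{}^\bullet({}^\bullet t)$ (computed in $N^\Theta$), and $Seq(A)$ the sequence firing each transition of $A$ once in a fixed order ($\epsilon$ if $A=\emptyset$). Expanded sequence: $\theta(\epsilon)=\epsilon$ and $\theta(t\alpha')=Seq(NewTransPre(t))\,t\,\theta(\alpha')$. Reduced sequence: for a sequence $\beta'$ of $S^\Theta$, $\hat\theta(\beta')$ is obtained by removing each occurrence of a new transition $t_p^{(p,t)}$ after which no occurrence of $t$ (the unique transition with $\{t\}=(t_p^{(p,t)\bullet})^\bullet$) appears in $\beta'$. *)

(* Defs.v *)
From mathcomp Require Import all_boot all_order all_algebra.
Set Implicit Arguments. Unset Strict Implicit. Unset Printing Implicit Defensive.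
Import GRing.Theory Num.Theory.

(* A Petri net N = (P, T, W): W(p,t) = pre p t, W(t,p) = post t p. *)
Record pnet (P T : finType) := PNet { pre : P -> T -> nat ; post : T -> P -> nat }.
Arguments PNet {P T}.
Arguments pre {P T}.
Arguments post {P T}.

Section Basic.
Context {P T : finType} (N : pnet P T).

Definition tpost (p : P) : {set T} := [set t | 0 < pre N p t].
Definition tpre (p : P) : {set T} := [set t | 0 < post N t p].
Definition ppre (t : T) : {set P} := [set p | 0 < pre N p t].
Definition ppost (t : T) : {set P} := [set p | 0 < post N t p].

Definition inc (p : P) (t : T) : int := (post N t p)%:Z - (pre N p t)%:Z.

Definition enabled (M : P -> nat) (t : T) : bool := [forall p, pre N p t <= M p].
Definition fire (M : P -> nat) (t : T) : P -> nat := fun p => M p - pre N p t + post N t p.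
Fixpoint feasible (M : P -> nat) (s : seq T) : bool :=
  if s is t :: s' then enabled M t && feasible (fire M t) s' else true.
Fixpoint after (M : P -> nat) (s : seq T) : P -> nat :=
  if s is t :: s' then after (fire M t) s' else M.

Definition live (M0 : P -> nat) : Prop :=
  forall t s, feasible M0 s ->
    exists s', feasible (after M0 s) s' && enabled (after (after M0 s) s') t.

Definition deadlockable (M0 : P -> nat) : Prop :=
  exists s, feasible M0 s && [forall t, ~~ enabled (after M0 s) t].

Definition sbounded (M0 : P -> nat) (p : P) : Prop :=
  exists b : nat, forall Y : T -> nat,
    (forall q, (0 <= (M0 q)%:Z + \sum_(t : T) inc q t * (Y t)%:Z)%R) ->
    ((M0 p)%:Z + \sum_(t : T) inc p t * (Y t)%:Z <= b%:Z)%R.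

Definition shared (p : P) : bool := 1 < #|tpost p|.
Definition is1S : bool := #|[set p | shared p]| <= 1.
Definition homogeneous : Prop :=
  forall p t t', 0 < pre N p t -> 0 < pre N p t' -> pre N p t = pre N p t'.
(* deleting the shared place (if any) leaves places with <= 1 input and <= 1 output *)
Definition h1s_wmg : Prop :=
  [/\ homogeneous, is1S & forall p, ~~ shared p -> (#|tpre p| <= 1) && (#|tpost p| <= 1)].

Definition edge : rel (P + T) := fun x y =>
  match x, y with
  | inl p, inr t => 0 < pre N p t
  | inr t, inl p => 0 < post N t p
  | _, _ => false
  end.
Definition strongly_connected : Prop := forall x y, connect edge x y.
(* the net obtained by deleting the shared place (if any), keeping all transitions *)
Definition keep (x : P + T) : bool :=
  match x with inl p => ~~ shared p | inr _ => true end.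
Definition edge_del : rel (P + T) := fun x y => [&& keep x, keep y & edge x y].
Definition del_strongly_connected : Prop :=
  forall x y, keep x -> keep y -> connect edge_del x y.

Definition parikh (s : seq T) (t : T) : nat := count_mem t s.

Definition thetaPair (pt : P * T) : bool :=
  (tpost pt.1 == [set pt.2]) && (1 < #|ppre pt.2|).
Definition TP : finType := {pt : P * T | thetaPair pt}.

(* places of N^Theta: original places, and for each pair x:
   inr (x, false) = p_a^x (initially 0), inr (x, true) = p_b^x (initially 1).
   transitions of N^Theta: original transitions, and inr x = t_p^x. *)
Definition PTh : finType := (P + TP * bool)%type.
Definition TTh : finType := (T + TP)%type.

Definition thetaPre (q : PTh) (u : TTh) : nat :=
  match q, u with
  | inl p, inl t => if thetaPair (p, t) then 0 else pre N p t
  | inl p, inr x => if (val x).1 == p then pre N p (val x).2 else 0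
  | inr (x, false), inl t => if (val x).2 == t then 1 else 0
  | inr (x, true), inr y => if x == y then 1 else 0
  | _, _ => 0
  end.

Definition thetaPost (u : TTh) (q : PTh) : nat :=
  match u, q with
  | inl t, inl p => post N t p
  | inr x, inr (y, false) => if x == y then 1 else 0
  | inl t, inr (y, true) => if (val y).2 == t then 1 else 0
  | _, _ => 0
  end.

Definition thetaNet : pnet PTh TTh := PNet thetaPre thetaPost.

Definition thetaM0 (M0 : P -> nat) : PTh -> nat := fun q =>
  match q with inl p => M0 p | inr (_, b) => nat_of_bool b end.

Definition newTransPre (t : T) : {set TP} :=
  [set x | [exists q : PTh, (0 < thetaPost (inr x) q) && (0 < thetaPre q (inl t))]].

(* expanded sequence; ordr A is the fixed firing order Seq(A) of the set A *)
Fixpoint expand (ordr : {set TP} -> seq TP) (s : seq T) : seq TTh :=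
  if s is t :: s' then [seq inr x | x <- ordr (newTransPre t)] ++ inl t :: expand ordr s'
  else [::].

(* the unique original transition t with {t} = (t_p^bullet)^bullet *)
Definition targetT (x : TP) : T := (val x).2.

Fixpoint reduce (s : seq TTh) : seq TTh :=
  if s is u :: s' then
    match u with
    | inr x => if (inl (targetT x) : TTh) \in s' then u :: reduce s' else reduce s'
    | inl _ => u :: reduce s'
    end
  else [::].

End Basic.

Arguments thetaM0 {P T} N M0 _.
Arguments expand {P T} N ordr s.
Arguments reduce {P T} N s.
Arguments newTransPre {P T} N t.
Arguments targetT {P T} N x.

(* Main.v *)
Require Import Defs.
From mathcomp Require Import all_boot all_order all_algebra.
From mathcomp Require Import zify.
Set Implicit Arguments. Unset Strict Implicit. Unset Printing Implicit Defensive.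

Section Th.
Context {P T : finType} (N : pnet P T).
Local Notation NT := (thetaNet N).
Local Notation TPN := (TP N).

Lemma tpost_pair (x : TPN) : tpost N (val x).1 = [set (val x).2].
Proof. by case/andP: (valP x) => /eqP. Qed.

Lemma pre_pair_pos (x : TPN) : 0 < pre N (val x).1 (val x).2.
Proof.
have : (val x).2 \in tpost N (val x).1 by rewrite tpost_pair set11.
by rewrite inE.
Qed.

Lemma pre_pair_other (x : TPN) t : t != (val x).2 -> pre N (val x).1 t = 0.
Proof.
move=> ne; apply/eqP; rewrite eqn0Ngt; apply/negP => H.
have : t \in tpost N (val x).1 by rewrite inE.
by rewrite tpost_pair inE (negbTE ne).
Qed.

Lemma pair_inj (x y : TPN) : (val x).1 = (val y).1 -> x = y.
Proof.
move=> E; apply: val_inj.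
have E2 : (val x).2 = (val y).2.
  by apply/set1P; rewrite -tpost_pair -E tpost_pair set11.
by case: (val x) (val y) E E2 => [a b] [c d] /= -> ->.
Qed.

Lemma thetaPair_fst (y : TPN) t : thetaPair N ((val y).1, t) = (t == (val y).2).
Proof.
apply/idP/eqP.
  case/andP=> /eqP /= H _. by apply/set1P; rewrite -tpost_pair H set11.
move=> ->; rewrite -surjective_pairing; exact: valP.
Qed.

Lemma thetaPair_nopair p t : (forall x : TPN, (val x).1 != p) -> thetaPair N (p, t) = false.
Proof.
move=> H; apply/negP => Hp.
by move: (H (exist _ (p, t) Hp)) => /=; rewrite eqxx.
Qed.

(* simulation relation *)
Definition R (MN : P -> nat) (M' : PTh N -> nat) : Prop :=
  [/\ forall x, M' (inr (x, false)) + M' (inr (x, true)) = 1,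
      forall p, (forall x : TPN, (val x).1 != p) -> MN p = M' (inl p) &
      forall x : TPN, MN (val x).1 = M' (inl (val x).1) + M' (inr (x, false)) * pre N (val x).1 (val x).2].

Definition clean (M' : PTh N -> nat) := forall x, M' (inr (x, false)) = 0.

Lemma R0 M0 : R M0 (thetaM0 N M0) /\ clean (thetaM0 N M0).
Proof. by split=> //; split=> // x /=; rewrite addn0. Qed.

Lemma pairP p : (exists x : TPN, (val x).1 = p) \/ (forall x : TPN, (val x).1 != p).
Proof.
case: (pickP (fun x : TPN => (val x).1 == p)) => [x /eqP Hx|H].
  by left; exists x.
by right=> x; rewrite H.
Qed.

Lemma preE_pp p t : pre NT (inl p) (inl t) = if thetaPair N (p, t) then 0 else pre N p t.
Proof. by []. Qed.
Lemma preE_px p (x : TPN) : pre NT (inl p) (inr x) = if (val x).1 == p then pre N p (val x).2 else 0.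
Proof. by []. Qed.
Lemma preE_at (y : TPN) t : pre NT (inr (y, false)) (inl t) = ((val y).2 == t).
Proof. by []. Qed.
Lemma preE_ax (y : TPN) x : pre NT (inr (y, false)) (inr x) = 0.
Proof. by []. Qed.
Lemma preE_bt (y : TPN) t : pre NT (inr (y, true)) (inl t) = 0.
Proof. by []. Qed.
Lemma preE_bx (y : TPN) x : pre NT (inr (y, true)) (inr x) = (y == x).
Proof. by []. Qed.
Lemma postE_tp t p : post NT (inl t) (inl p) = post N t p.
Proof. by []. Qed.
Lemma postE_xp (x : TPN) p : post NT (inr x) (inl p) = 0.
Proof. by []. Qed.
Lemma postE_ta t (y : TPN) : post NT (inl t) (inr (y, false)) = 0.
Proof. by []. Qed.
Lemma postE_xa x (y : TPN) : post NT (inr x) (inr (y, false)) = (x == y).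
Proof. by []. Qed.
Lemma postE_tb t (y : TPN) : post NT (inl t) (inr (y, true)) = ((val y).2 == t).
Proof. by []. Qed.
Lemma postE_xb x (y : TPN) : post NT (inr x) (inr (y, true)) = 0.
Proof. by []. Qed.
Lemma ab1_a1 a b : a + b = 1 -> b != 1 -> a = 1.
Proof. move=> H /eqP; lia. Qed.
Lemma ab1_b0 a b : a + b = 1 -> a = 1 -> b = 0.
Proof. lia. Qed.
Lemma eq_inl_inr (A B : eqType) (a : A) (b : B) : (inl a == inr b :> A + B) = false.
Proof. by []. Qed.
Lemma eq_inr_inl (A B : eqType) (a : A) (b : B) : (inr b == inl a :> A + B) = false.
Proof. by []. Qed.
Lemma eq_inr_inr (A B : eqType) (a b : B) : (inr a == inr b :> A + B) = (a == b).
Proof. by []. Qed.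
Lemma nb0 : nat_of_bool false = 0. Proof. by []. Qed.
Lemma nb1 : nat_of_bool true = 1. Proof. by []. Qed.
Definition preE := (preE_pp, preE_px, preE_at, preE_ax, preE_bt, preE_bx).
Definition postE := (postE_tp, postE_xp, postE_ta, postE_xa, postE_tb, postE_xb).
Lemma fireE M u q : fire NT M u q = M q - pre NT q u + post NT u q.
Proof. by []. Qed.

Lemma B1 MN M' x : R MN M' -> enabled NT M' (inr x) -> R MN (fire NT M' (inr x)).
Proof.
case=> R1 R2 R3 /forallP En.
have Hb : 0 < M' (inr (x, true)) by have := En (inr (x, true)); rewrite preE eqxx.
have Hp : pre N (val x).1 (val x).2 <= M' (inl (val x).1) by have := En (inl (val x).1); rewrite preE eqxx.
have Ha : M' (inr (x, false)) = 0 by move: (R1 x); lia.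
split.
- move=> y; rewrite !fireE !preE !postE; case: (eqVneq x y) => [<-|ne]; first by move: (R1 x); lia.
  by move: (R1 y) => /=; lia.
- move=> p Hnp; rewrite fireE preE postE (negbTE (Hnp x)) subn0 addn0; exact: R2.
- move=> y; rewrite !fireE !preE !postE. case: (eqVneq x y) => [<-|ne].
    rewrite eqxx R3 Ha; lia.
  have ne1 : (val x).1 != (val y).1 by apply/contra_neq: ne; exact: pair_inj.
  rewrite (negbTE ne1) ?nb0 ?subn0 ?addn0 R3; lia.
Qed.

Lemma B2 MN M' t : R MN M' -> enabled NT M' (inl t) ->
  enabled N MN t /\ R (fire N MN t) (fire NT M' (inl t)).
Proof.
case=> R1 R2 R3 /forallP En.
have EnN : enabled N MN t.
  apply/forallP => p; case: (pairP p) => [[x <-]|Hnp].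
    case: (eqVneq t (val x).2) => [Et|ne]; last by rewrite pre_pair_other.
    have Ha : 0 < M' (inr (x, false)) by have := En (inr (x, false)); rewrite preE Et eqxx.
    rewrite R3 -Et; move: (R1 x); nia.
  have := En (inl p); rewrite preE thetaPair_nopair // R2 //.
split=> //.
split.
- move=> y; rewrite !fireE !preE !postE.
  case: (eqVneq (val y).2 t) => [Et|ne]; rewrite ?nb0 ?nb1.
    have Ha : 0 < M' (inr (y, false)) by have := En (inr (y, false)); rewrite preE Et eqxx.
    move: (R1 y); lia.
  by rewrite !subn0 !addn0 R1.
- move=> p Hnp; rewrite fireE preE postE /fire thetaPair_nopair // R2 //.
- move=> y; rewrite !fireE !preE !postE thetaPair_fst /fire.
  case: (eqVneq t (val y).2) => [Et|ne]; rewrite ?nb0 ?nb1.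
    have Ha : 0 < M' (inr (y, false)) by have := En (inr (y, false)); rewrite preE Et eqxx.
    have Ha1 : M' (inr (y, false)) = 1 by move: (R1 y); lia.
    rewrite R3 Ha1 Et; lia.
  rewrite pre_pair_other // R3; lia.
Qed.

Lemma E1 MN M' t : R MN M' -> enabled N MN t ->
  (forall x : TPN, (val x).2 = t -> M' (inr (x, false)) = 1) -> enabled NT M' (inl t).
Proof.
case=> R1 R2 R3 /forallP En Ha; apply/forallP => -[p|[y []]]; rewrite preE.
- case: (pairP p) => [[x <-]|Hnp].
    rewrite thetaPair_fst; case: eqVneq => // ne; rewrite pre_pair_other //.
  by rewrite thetaPair_nopair // -R2.
- by [].
- by case: eqVneq => // /Ha ->.
Qed.

Lemma E2 MN M' x : R MN M' -> M' (inr (x, true)) = 1 ->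
  pre N (val x).1 (val x).2 <= MN (val x).1 -> enabled NT M' (inr x).
Proof.
case=> R1 R2 R3 Hb Hle; apply/forallP => -[p|[y []]]; rewrite preE.
- case: eqVneq => // <-. move: Hle (R1 x); rewrite R3 Hb; lia.
- by case: eqVneq => // ->; rewrite Hb.
- by [].
Qed.

Lemma feasible_cat (Q U : finType) (K : pnet Q U) M s1 s2 :
  feasible K M (s1 ++ s2) = feasible K M s1 && feasible K (after K M s1) s2.
Proof. by elim: s1 M => //= u s1 IH M; rewrite IH andbA. Qed.

Lemma after_cat (Q U : finType) (K : pnet Q U) M s1 s2 :
  after K M (s1 ++ s2) = after K (after K M s1) s2.
Proof. by elim: s1 M => //= u s1 IH M. Qed.

Lemma G MN M' (l : seq TPN) : R MN M' -> uniq l ->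
  (forall x, x \in l -> M' (inr (x, true)) = 1 /\ pre N (val x).1 (val x).2 <= MN (val x).1) ->
  [/\ feasible NT M' (map inr l), R MN (after NT M' (map inr l)) &
      forall y b, after NT M' (map inr l) (inr (y, b)) = if y \in l then nat_of_bool (~~ b) else M' (inr (y, b))].
Proof.
elim: l M' => [|x l IH] M' HR Hu Hl; first by split.
case/andP: Hu => xl Hu.
have [Hb Hle] := Hl x (mem_head _ _).
have En := E2 HR Hb Hle.
have HR1 := B1 HR En.
have Hv : forall y b, fire NT M' (inr x) (inr (y, b)) = if y == x then nat_of_bool (~~ b) else M' (inr (y, b)).
  have Ha : M' (inr (x, false)) = 0 by case: HR => R1 _ _; move: (R1 x); rewrite Hb; lia.
  move=> y [] /=; rewrite fireE preE postE; case: (eqVneq y x) => [->|ne];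
    by rewrite ?Hb ?Ha /= ?subn0 ?addn0.
have [F1 F2 F3] : [/\ feasible NT (fire NT M' (inr x)) (map inr l), R MN (after NT (fire NT M' (inr x)) (map inr l)) &
      forall y b, after NT (fire NT M' (inr x)) (map inr l) (inr (y, b)) = if y \in l then nat_of_bool (~~ b) else fire NT M' (inr x) (inr (y, b))].
  apply: IH => // z zl; rewrite Hv; have zl' : z \in x :: l by rewrite in_cons zl orbT.
  have [-> ->] := Hl z zl'.
  by case: eqVneq zl xl => [->->|].
have -> : after NT M' (map inr (x :: l)) = after NT (fire NT M' (inr x)) (map inr l) by [].
split=> //; first by rewrite /= En F1.
move=> y b; rewrite F3 Hv in_cons; case: eqVneq => [->|] //=.
by rewrite (negbTE xl).
Qed.

Lemma F MN M' t (l : seq TPN) : R MN M' -> enabled N MN t -> uniq l ->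
  (forall x, (x \in l) = ((val x).2 == t) && (M' (inr (x, true)) == 1)) ->
  [/\ feasible NT M' (map inr l ++ [:: inl t]),
      R (fire N MN t) (after NT M' (map inr l ++ [:: inl t])) &
      forall y b, after NT M' (map inr l ++ [:: inl t]) (inr (y, b)) =
        if (val y).2 == t then nat_of_bool b else M' (inr (y, b))].
Proof.
move=> HR EnN Hu Hl.
have Hc : forall x, x \in l -> M' (inr (x, true)) = 1 /\ pre N (val x).1 (val x).2 <= MN (val x).1.
  move=> x; rewrite Hl => /andP [/eqP Ht /eqP Hb]; split=> //.
  by move/forallP: EnN => /(_ (val x).1); rewrite Ht.
have [G1 G2 G3] := G HR Hu Hc.
have Ha : forall x : TPN, (val x).2 = t -> after NT M' (map inr l) (inr (x, false)) = 1.
  move=> x Ht; rewrite G3 Hl Ht eqxx andTb; case: eqVneq => [_|ne]; first by [].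
  by case: HR => R1 _ _; apply: ab1_a1 (R1 x) ne.
have EnT := E1 G2 EnN Ha.
have [_ HR2] := B2 G2 EnT.
have after1 : forall M u, after NT M [:: u] = fire NT M u by [].
split; first by rewrite feasible_cat G1 /= EnT.
  by rewrite after_cat after1.
move=> y b; rewrite after_cat after1 fireE.
case: (eqVneq (val y).2 t) => [Ht|ne].
  have Hay := Ha y Ht.
  case: b; rewrite !preE !postE Ht eqxx ?Hay //.
  by case: G2 => R1 _ _; rewrite (ab1_b0 (R1 y) Hay).
have yl : y \notin l by rewrite Hl (negbTE ne).
case: b; rewrite !preE !postE (negbTE ne) G3 (negbTE yl) ?nb0 subn0 addn0 //.
Qed.

Lemma newTransPre_E t (x : TPN) : (x \in newTransPre N t) = ((val x).2 == t).
Proof.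
rewrite inE; apply/existsP/idP.
  case=> -[p|[y b]] /andP [H1 H2].
  - have : 0 < post NT (inr x) (inl p) := H1. by rewrite postE.
  case: b H1 H2 => H1 H2.
  - have : 0 < post NT (inr x) (inr (y, true)) := H1. by rewrite postE.
  - have : 0 < post NT (inr x) (inr (y, false)) := H1.
    have : 0 < pre NT (inr (y, false)) (inl t) := H2.
    rewrite postE preE; case: (eqVneq x y) => [->|] //; by case: eqVneq.
move=> Ht; exists (inr (x, false)).
have -> : @thetaPost _ _ N (inr x) (inr (x, false)) = post NT (inr x) (inr (x, false)) by [].
have -> : @thetaPre _ _ N (inr (x, false)) (inl t) = pre NT (inr (x, false)) (inl t) by [].
by rewrite postE preE eqxx Ht.
Qed.

Lemma expand_sim (ordr : {set TPN} -> seq TPN) (Hordr : forall A, perm_eq (ordr A) (enum A))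
  alpha : forall MN M', R MN M' -> clean M' -> feasible N MN alpha ->
  [/\ feasible NT M' (expand N ordr alpha), R (after N MN alpha) (after NT M' (expand N ordr alpha))
    & clean (after NT M' (expand N ordr alpha))].
Proof.
elim: alpha => [|t alpha IH] MN M' HR Hc /=; first by split.
case/andP=> EnN Hf.
have Hu : uniq (ordr (newTransPre N t)) by rewrite (perm_uniq (Hordr _)) enum_uniq.
have Hl : forall x, (x \in ordr (newTransPre N t)) = ((val x).2 == t) && (M' (inr (x, true)) == 1).
  move=> x; rewrite (perm_mem (Hordr _)) mem_enum newTransPre_E.
  case: HR => R1 _ _; move: (R1 x); rewrite Hc add0n => ->; by rewrite eqxx andbT.
have [F1 F2 F3] := F HR EnN Hu Hl.
have Hc2 : clean (after NT M' (map inr (ordr (newTransPre N t)) ++ [:: inl t])).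
  move=> y; rewrite F3; case: ifP => //; by rewrite Hc.
have [I1 I2 I3] := IH _ _ F2 Hc2 Hf.
have E : [seq inr x | x <- ordr (newTransPre N t)] ++ inl t :: expand N ordr alpha =
  (map inr (ordr (newTransPre N t)) ++ [:: inl t]) ++ expand N ordr alpha by rewrite -catA.
rewrite E feasible_cat F1 andTb; rewrite !after_cat in I1 I2 I3 *; by split.
Qed.

Fixpoint proj (s : seq (TTh N)) : seq T :=
  match s with
  | [::] => [::]
  | u :: s' => match u with inl t => t :: proj s' | inr _ => proj s' end
  end.

Lemma proj_sim s : forall MN M', R MN M' -> feasible NT M' s ->
  feasible N MN (proj s) /\ R (after N MN (proj s)) (after NT M' s).
Proof.
elim: s => [|u s IH] MN M' HR /=; first by [].
case/andP=> En Hf; case: u En Hf => [t|x] En Hf /=.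
  have [EnN HR2] := B2 HR En.
  have [I1 I2] := IH _ _ HR2 Hf.
  by rewrite EnN I1.
exact: IH _ _ (B1 HR En) Hf.
Qed.

Lemma H_sim sigma : forall MN M', R MN M' -> feasible N MN sigma ->
  exists s, [/\ feasible NT M' s, R (after N MN sigma) (after NT M' s) &
    forall y, M' (inr (y, true)) = 1 -> after NT M' s (inr (y, true)) = 1].
Proof.
elim: sigma => [|t sigma IH] MN M' HR /=; first by exists [::].
case/andP=> EnN Hf.
pose l := enum [set x : TPN | ((val x).2 == t) && (M' (inr (x, true)) == 1)].
have Hu : uniq l by rewrite enum_uniq.
have Hl : forall x, (x \in l) = ((val x).2 == t) && (M' (inr (x, true)) == 1).
  by move=> x; rewrite mem_enum inE.
have [F1 F2 F3] := F HR EnN Hu Hl.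
have [s [S1 S2 S3]] := IH _ _ F2 Hf.
exists ((map inr l ++ [:: inl t]) ++ s).
rewrite feasible_cat F1 andTb; rewrite !after_cat in S1 S2 S3 F3 *; split=> // y Hy.
apply: S3; rewrite F3; case: ifP => //.
Qed.

Lemma feasible_mono (Q U : finType) (K : pnet Q U) q0 r : forall M1 M2,
  (forall u, u \in r -> pre K q0 u = 0) -> (forall q, q != q0 -> M1 q <= M2 q) ->
  feasible K M1 r -> feasible K M2 r.
Proof.
elim: r => [|u r IH] M1 M2 //= Hr Hle /andP [/forallP En Hf].
have En2 : enabled K M2 u.
  apply/forallP => q; case: (eqVneq q q0) => [->|ne].
    by rewrite Hr ?mem_head.
  exact: leq_trans (En q) (Hle q ne).
rewrite En2; apply: (IH (fire K M1 u)) Hf.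
  by move=> v vr; apply: Hr; rewrite in_cons vr orbT.
move=> q ne; rewrite /fire leq_add2r; exact: leq_sub2r (Hle q ne).
Qed.

Lemma mem_reduce s u : u \in reduce N s -> u \in s.
Proof.
elim: s => [|v s IH] //=; case: v => [t|x].
  by rewrite !in_cons => /orP [->|/IH ->] //; rewrite orbT.
case: ifP => _; rewrite ?in_cons.
  by case/orP => [->|/IH ->] //; rewrite orbT.
by move/IH ->; rewrite orbT.
Qed.

Lemma reduce_feasible s : forall M, feasible NT M s -> feasible NT M (reduce N s).
Proof.
elim: s => [|u s IH] M //=; case/andP=> En Hf.
case: u En Hf => [t|x] En Hf /=; first by rewrite En IH.
case: ifP => Hin /=; first by rewrite En IH.
apply: (feasible_mono (q0 := inr (x, false)) (M1 := fire NT M (inr x))); last exact: IH.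
  move=> v /mem_reduce vs; case: v vs => [t|y] vs; last by rewrite preE.
  rewrite preE; case: eqVneq => // Et; move: Hin; by rewrite /targetT Et vs.
move=> q ne; rewrite fireE; case: q ne => [p|[y b]] ne.
  by rewrite postE addn0 leq_subr.
case: b ne => ne; first by rewrite postE addn0 leq_subr.
rewrite postE; case: (eqVneq x y) => [Exy|_]; first by rewrite Exy eqxx in ne.
by rewrite nb0 addn0 leq_subr.
Qed.

Lemma cnt_cons (A : eqType) (u v : A) s : count_mem u (v :: s) = (v == u) + count_mem u s.
Proof. by []. Qed.
Lemma reduce_inl t s : reduce N (inl t :: s) = inl t :: reduce N s.
Proof. by []. Qed.
Lemma reduce_inr y s : reduce N (inr y :: s) =
  if (inl (targetT N y) : TTh N) \in s then inr y :: reduce N s else reduce N s.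
Proof. by []. Qed.

Lemma keep_count (x : TPN) s : forall MN M', R MN M' -> feasible NT M' s ->
  count_mem (inr x) (reduce N s) + M' (inr (x, false)) * ((inl (val x).2 : TTh N) \in s)
  = count_mem (inl (val x).2) s.
Proof.
elim: s => [|u s IH] MN M' HR; first by rewrite in_nil muln0.
case/andP=> En Hf; have HR' := HR; case: HR' => R1 _ _.
case: u En Hf => [t|y] En Hf.
  have [_ HR2] := B2 HR En.
  have := IH _ _ HR2 Hf; rewrite fireE preE postE addn0 reduce_inl in_cons !cnt_cons eq_inl_inr add0n.
  case: (eqVneq t (val x).2) => [Et|ne].
    rewrite Et eqxx.
    have Ha : 0 < M' (inr (x, false)).
      have := (forallP En) (inr (x, false)). by rewrite preE Et eqxx.
    have Ha1 : M' (inr (x, false)) = 1 by move: (R1 x) Ha; lia.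
    rewrite Ha1 subnn mul0n addn0 => <-; rewrite orTb muln1 nb1; lia.
  have ne' : (inl (val x).2 == inl t :> TTh N) = false.
    by apply/negbTE; apply/contra_neq: ne => -[->].
  rewrite ne' [inl t == _]eq_sym ne' nb0 subn0 orFb => <-; by rewrite add0n.
have HR2 := B1 HR En.
have := IH _ _ HR2 Hf; rewrite fireE preE postE subn0 in_cons eq_inl_inr orFb reduce_inr /targetT cnt_cons eq_inr_inl add0n.
case: (eqVneq y x) => [Ey|ne].
  rewrite Ey.
  have Hb : 0 < M' (inr (x, true)).
    have := (forallP En) (inr (x, true)). by rewrite preE Ey eqxx.
  have Ha0 : M' (inr (x, false)) = 0 by move: (R1 x) Hb; lia.
  rewrite Ha0 add0n nb1 mul1n => <-; rewrite mul0n addn0.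
  by case: ifP => _; rewrite ?cnt_cons ?eqxx ?nb1 ?nb0 ?addn0 // addnC.
rewrite nb0 addn0 => <-.
case: ifP => _; by rewrite ?cnt_cons ?eq_inr_inr ?(negbTE ne) ?nb0 ?add0n.
Qed.

Lemma cnt_map_inr (l : seq TPN) (u : TTh N) :
  count_mem u (map inr l) = if u is inr x then count_mem x l else 0.
Proof.
case: u => [t|x].
  elim: l => [|y l IH] //; by rewrite map_cons cnt_cons IH.
elim: l => [|y l IH] //; by rewrite map_cons !cnt_cons IH eq_inr_inr.
Qed.

Lemma cnt_expand (ordr : {set TPN} -> seq TPN) (Hordr : forall A, perm_eq (ordr A) (enum A))
  alpha (u : TTh N) :
  count_mem u (expand N ordr alpha) =
  match u with inl t => count_mem t alpha | inr x => count_mem (val x).2 alpha end.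
Proof.
elim: alpha => [|t alpha IH]; first by case: u.
move: IH.
have -> : expand N ordr (t :: alpha) =
  map inr (ordr (newTransPre N t)) ++ inl t :: expand N ordr alpha by [].
case: u => [t'|x] IH; rewrite count_cat cnt_map_inr cnt_cons IH.
  by rewrite add0n cnt_cons.
rewrite eq_inl_inr add0n cnt_cons ((permP (Hordr _)) (pred1 x)) count_uniq_mem ?enum_uniq //.
by rewrite mem_enum newTransPre_E eq_sym.
Qed.

Lemma cnt_reduce_inl s t : count_mem (inl t) (reduce N s) = count_mem (inl t) s.
Proof.
elim: s => [|u s IH] //; case: u => [t'|y].
  by rewrite reduce_inl !cnt_cons IH.
rewrite reduce_inr cnt_cons eq_inr_inl add0n; case: ifP => _ //; by rewrite cnt_cons eq_inr_inl add0n.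
Qed.

Lemma cnt_proj s t : count_mem t (proj s) = count_mem (inl t) s.
Proof.
elim: s => [|u s IH] //; case: u => [t'|y].
  have -> : proj (inl t' :: s) = t' :: proj s by [].
  by rewrite !cnt_cons IH.
have -> : proj (inr y :: s) = proj s by [].
by rewrite cnt_cons eq_inr_inl add0n.
Qed.

Lemma part2 (ordr : {set TPN} -> seq TPN) (Hordr : forall A, perm_eq (ordr A) (enum A)) M0 alpha :
  feasible N M0 alpha -> feasible NT (thetaM0 N M0) (expand N ordr alpha).
Proof. by move=> Hf; have [R0a R0b] := R0 M0; case: (expand_sim Hordr R0a R0b Hf). Qed.

Lemma part3 (ordr : {set TPN} -> seq TPN) (Hordr : forall A, perm_eq (ordr A) (enum A)) M0 beta' :
  feasible NT (thetaM0 N M0) beta' ->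
  feasible NT (thetaM0 N M0) (reduce N beta') /\
  exists alpha : seq T,
    [/\ feasible N M0 alpha, feasible NT (thetaM0 N M0) (expand N ordr alpha)
      & parikh (expand N ordr alpha) =1 parikh (reduce N beta')].
Proof.
move=> Hf; split; first exact: reduce_feasible.
have [R0a R0b] := R0 M0.
have [P1 P2] := proj_sim R0a Hf.
exists (proj beta'); split=> //; first exact: part2.
move=> u; rewrite /parikh (cnt_expand Hordr); case: u => [t|x].
  by rewrite cnt_proj cnt_reduce_inl.
rewrite cnt_proj -(keep_count x R0a Hf).
by have -> : thetaM0 N M0 (inr (x, false)) = 0 by []; rewrite mul0n addn0.
Qed.

Lemma part5 M0 : deadlockable NT (thetaM0 N M0) <-> deadlockable N M0.
Proof.
have [R0a R0b] := R0 M0.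
split.
  case=> s /andP [Hf /forallP Hd].
  have [P1 [R1 R2 R3]] := proj_sim R0a Hf.
  exists (proj s); rewrite P1 /=; apply/forallP => t; apply/negP => EnN.
  case: (pickP (fun x : TPN => ((val x).2 == t) && (after NT (thetaM0 N M0) s (inr (x, true)) == 1))).
    move=> x /andP [/eqP Ht /eqP Hb].
    have := Hd (inr x); rewrite (E2 (And3 R1 R2 R3) Hb) //.
    by move/forallP: EnN => /(_ (val x).1); rewrite Ht.
  move=> Hn; have := Hd (inl t); rewrite (E1 (And3 R1 R2 R3) EnN) //.
  move=> x Ht; apply: ab1_a1 (R1 x) _; apply/negP => Hb; have := Hn x.
  by rewrite Ht eqxx Hb.
case=> alpha /andP [Hf /forallP Hd].
have [F1 F2 F3] := expand_sim (fun A : {set TPN} => perm_refl (enum A)) R0a R0b Hf.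
set M' := after NT (thetaM0 N M0) (expand N _ alpha) in F1 F2 F3.
set MN := after N M0 alpha in Hd F2.
pose l := enum [set x : TPN | pre N (val x).1 (val x).2 <= MN (val x).1].
have Hc : forall x, x \in l -> M' (inr (x, true)) = 1 /\ pre N (val x).1 (val x).2 <= MN (val x).1.
  move=> x; rewrite mem_enum inE => ->; split=> //.
  by case: F2 => R1 _ _; move: (R1 x); rewrite F3 add0n.
have [G1 G2 G3] := G F2 (enum_uniq _) Hc.
exists (expand N (fun A => enum A) alpha ++ map inr l).
rewrite feasible_cat F1 G1 /=; apply/forallP => u; apply/negP.
rewrite after_cat; case: u => [t|x] En.
  have [EnN _] := B2 G2 En.
  by have := Hd t; rewrite EnN.
have Hb : 0 < after NT M' (map inr l) (inr (x, true)).
  by have := (forallP En) (inr (x, true)); rewrite preE eqxx.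
have Hp : pre N (val x).1 (val x).2 <= after NT M' (map inr l) (inl (val x).1).
  by have := (forallP En) (inl (val x).1); rewrite preE eqxx.
move: Hb; rewrite G3; case: ifP => xl //= _.
case: G2 => _ _ R3.
have := R3 x; rewrite G3 xl F3 mul0n addn0 => E.
move: xl; rewrite mem_enum inE E Hp //.
Qed.

Lemma feasible1 (Q U : finType) (K : pnet Q U) M u : feasible K M [:: u] = enabled K M u.
Proof. by rewrite /= andbT. Qed.

Lemma L1 M0 alpha M' t : live N M0 -> feasible N M0 alpha -> R (after N M0 alpha) M' ->
  exists s sigma, [/\ feasible NT M' s, feasible N (after N M0 alpha) sigma,
    R (after N (after N M0 alpha) sigma) (after NT M' s),
    enabled N (after N (after N M0 alpha) sigma) t &
    forall y, M' (inr (y, true)) = 1 -> after NT M' s (inr (y, true)) = 1].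
Proof.
move=> Hl Hf HR.
have [sigma /andP [Hs En]] := Hl t alpha Hf.
have [s [S1 S2 S3]] := H_sim HR Hs.
by exists s, sigma.
Qed.

Lemma part6 M0 : live NT (thetaM0 N M0) <-> live N M0.
Proof.
have [R0a R0b] := R0 M0.
split.
  move=> Hl t s Hf.
  have [F1 F2 F3] := expand_sim (fun A : {set TPN} => perm_refl (enum A)) R0a R0b Hf.
  have [s' /andP [Hs' En]] := Hl (inl t) _ F1.
  have [P1 P2] := proj_sim F2 Hs'.
  have [EnN _] := B2 P2 En.
  by exists (proj s'); rewrite P1 EnN.
move=> Hl u beta Hf.
have [P1 P2] := proj_sim R0a Hf.
set M' := after NT (thetaM0 N M0) beta in P2 *.
set alpha := proj beta in P1 P2.
case: u => [t|x].
  have [s [sigma [S1 S2 S3 S4 _]]] := L1 t Hl P1 P2.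
  pose l := enum [set x : TPN | ((val x).2 == t) && (after NT M' s (inr (x, true)) == 1)].
  have Hll : forall x, (x \in l) = ((val x).2 == t) && (after NT M' s (inr (x, true)) == 1).
    by move=> x; rewrite mem_enum inE.
  have [F1 _ _] := F S3 S4 (enum_uniq _) Hll.
  exists (s ++ map inr l).
  move: F1; rewrite !feasible_cat S1 after_cat => /andP [-> /=].
  by rewrite andbT.
set t := (val x).2.
have [s1 [sigma1 [S1 S2 S3 S4 _]]] := L1 t Hl P1 P2.
pose l := enum [set y : TPN | ((val y).2 == t) && (after NT M' s1 (inr (y, true)) == 1)].
have Hll : forall y, (y \in l) = ((val y).2 == t) && (after NT M' s1 (inr (y, true)) == 1).
  by move=> y; rewrite mem_enum inE.
have [F1 F2 F3] := F S3 S4 (enum_uniq _) Hll.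
have Hf2 : feasible N M0 (alpha ++ sigma1 ++ [:: t]).
  by rewrite feasible_cat P1 feasible_cat S2 feasible1 S4.
have HR2 : R (after N M0 (alpha ++ sigma1 ++ [:: t]))
   (after NT (after NT M' s1) (map inr l ++ [:: inl t])).
  by rewrite after_cat after_cat; exact: F2.
have [s2 [sigma2 [T1 T2 T3 T4 T5]]] := L1 t Hl Hf2 HR2.
have Hb : after NT (after NT (after NT M' s1) (map inr l ++ [:: inl t])) s2 (inr (x, true)) = 1.
  by apply: T5; rewrite F3 eqxx.
exists (s1 ++ (map inr l ++ [:: inl t]) ++ s2).
rewrite feasible_cat S1 feasible_cat F1 T1 /=.
rewrite (after_cat _ _ s1) (after_cat _ _ (map inr l ++ [:: inl t])).
apply: (E2 T3 Hb).
by move/forallP: T4 => /(_ (val x).1).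
Qed.

Import GRing.Theory Num.Theory.

Lemma sum_if (I : finType) (i0 : I) (F : I -> int) :
  (\sum_(i : I) (if i == i0 then F i else 0) = F i0)%R.
Proof. by rewrite -big_mkcond big_pred1_eq. Qed.

Section Sums.
Local Open Scope ring_scope.
Variable Y' : TTh N -> nat.
Let Y t := Y' (inl t).
Let S' q := (\sum_(u : TTh N) inc NT q u * (Y' u)%:Z)%R.
Let SN p := (\sum_(t : T) inc N p t * (Y t)%:Z)%R.

Lemma S_split q : S' q = (\sum_(t : T) inc NT q (inl t) * (Y t)%:Z + \sum_(x : TPN) inc NT q (inr x) * (Y' (inr x))%:Z)%R.
Proof. by rewrite /S' big_sumType. Qed.

Lemma S_pa x : S' (inr (x, false)) = ((Y' (inr x))%:Z - (Y (val x).2)%:Z)%R.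
Proof.
rewrite S_split addrC; congr (_ + _)%R.
  rewrite -(sum_if x (fun y => (Y' (inr y))%:Z)); apply: eq_bigr => y _.
  rewrite /inc postE preE eq_sym; case: eqVneq => _ /=; by rewrite ?mul1r ?mul0r.
rewrite -(sum_if (val x).2 (fun t => - (Y t)%:Z))%R; apply: eq_bigr => t _.
rewrite /inc postE preE eq_sym; case: eqVneq => _ /=; by rewrite ?mulN1r ?mul0r ?sub0r ?mulNr ?mul1r.
Qed.

Lemma S_pb x : S' (inr (x, true)) = ((Y (val x).2)%:Z - (Y' (inr x))%:Z)%R.
Proof.
rewrite S_split; congr (_ + _)%R.
  rewrite -(sum_if (val x).2 (fun t => (Y t)%:Z)); apply: eq_bigr => t _.
  rewrite /inc postE preE eq_sym; case: eqVneq => _ /=; by rewrite ?mul1r ?mul0r ?subr0.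
rewrite -(sum_if x (fun y => - (Y' (inr y))%:Z))%R; apply: eq_bigr => y _.
rewrite /inc postE preE; case: eqVneq => _ /=; by rewrite ?sub0r ?mulNr ?mul1r ?mul0r ?oppr0.
Qed.

Lemma S_nopair p : (forall x : TPN, (val x).1 != p) -> S' (inl p) = SN p.
Proof.
move=> Hn; rewrite S_split [X in (_ + X)%R]big1 ?addr0; last first.
  move=> x _; by rewrite /inc postE preE (negbTE (Hn x)) subr0 mul0r.
apply: eq_bigr => t _; by rewrite /inc postE preE thetaPair_nopair.
Qed.

Lemma S_pair x : S' (inl (val x).1) =
  (SN (val x).1 + (pre N (val x).1 (val x).2)%:Z * ((Y (val x).2)%:Z - (Y' (inr x))%:Z))%R.
Proof.
rewrite S_split mulrBr addrA; congr (_ + _)%R; last first.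
  rewrite -(sum_if x (fun y => - ((pre N (val x).1 (val x).2)%:Z * (Y' (inr y))%:Z)))%R.
  apply: eq_bigr => y _; rewrite /inc postE preE.
  case: (eqVneq y x) => [->|ne]; first by rewrite eqxx sub0r mulNr.
  have ne1 : (val y).1 != (val x).1 by apply/contra_neq: ne; exact: pair_inj.
  by rewrite (negbTE ne1) subrr mul0r.
rewrite /SN -(sum_if (val x).2 (fun t => (pre N (val x).1 (val x).2)%:Z * (Y t)%:Z))%R.
rewrite (eq_bigr (fun t => inc N (val x).1 t * (Y t)%:Z + (if t == (val x).2 then (pre N (val x).1 (val x).2)%:Z * (Y t)%:Z else 0)))%R.
  by rewrite big_split.
move=> t _; rewrite /inc postE preE thetaPair_fst.
case: (eqVneq t (val x).2) => [->|ne].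
  by rewrite subr0 mulrBl addrNK.
by rewrite pre_pair_other // subr0 addr0.
Qed.

End Sums.

Local Open Scope ring_scope.
Lemma ler0n_int (n : nat) : (0 <= n%:Z)%R. Proof. by []. Qed.
Lemma arith1 (w a c m s : int) : 0 <= w -> 0 <= c - a -> 0 <= m + (s + w * (a - c)) -> 0 <= m + s.
Proof. nia. Qed.
Lemma arith2 (w a c m s b : int) : 0 <= w -> 0 <= c - a -> m + s <= b -> m + (s + w * (a - c)) <= b.
Proof. nia. Qed.
Lemma part4 M0 : (forall p : P, sbounded N M0 p) -> forall q : PTh N, sbounded NT (thetaM0 N M0) q.
Proof.
move=> Hb q.
have M0l : forall p, thetaM0 N M0 (inl p) = M0 p by [].
have M0a : forall x, thetaM0 N M0 (inr (x, false)) = 0%N by [].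
have M0b : forall x, thetaM0 N M0 (inr (x, true)) = 1%N by [].
case: q => [p|[x b]].
  have [bd Hbd] := Hb p.
  exists bd => Y' Hn.
  have HnN : forall q0, (0 <= (M0 q0)%:Z + \sum_(t : T) inc N q0 t * (Y' (inl t))%:Z)%R.
    move=> q0; have := Hn (inl q0); rewrite M0l.
    case: (pairP q0) => [[x <-]|Hnp]; last by rewrite S_nopair.
    have := Hn (inr (x, false)); rewrite M0a S_pa S_pair.
    move=> H1 H2; apply: arith1 H2; [exact: ler0n_int | rewrite -(add0r (_ - _)); exact: H1].
  have := Hbd _ HnN; rewrite M0l.
  case: (pairP p) => [[x Ex]|Hnp]; last by rewrite S_nopair.
  move: (Hn (inr (x, false))); rewrite M0a S_pa -Ex S_pair.
  move=> H1 H2; apply: arith2 H2; [exact: ler0n_int | rewrite -(add0r (_ - _)); exact: H1].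
exists 1%N => Y' Hn.
have H1 := Hn (inr (x, false)); have H2 := Hn (inr (x, true)).
rewrite M0a S_pa in H1; rewrite M0b S_pb in H2.
case: b; rewrite ?M0a ?M0b ?S_pa ?S_pb; lia.
Qed.

Local Close Scope ring_scope.

Lemma card_sumset (A B : finType) (Pr : pred (A + B)) :
  #|[set u | Pr u]| = #|[set a | Pr (inl a)]| + #|[set b | Pr (inr b)]|.
Proof.
rewrite -!sum1_card big_sumType; congr (_ + _); apply: eq_bigl => i; by rewrite !inE.
Qed.

Lemma card_eq1 (A : finType) (a : A) : #|[set t | 0 < (a == t)]| = 1.
Proof.
have -> : [set t | 0 < (a == t)] = [set a] by apply/setP => t; rewrite !inE eq_sym; case: eqVneq.
by rewrite cards1.
Qed.
Lemma card_eq1' (A : finType) (a : A) : #|[set t | 0 < (t == a)]| = 1.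
Proof.
have -> : [set t | 0 < (t == a)] = [set a] by apply/setP => t; rewrite !inE; case: eqVneq.
by rewrite cards1.
Qed.
Lemma card_0 (A : finType) : #|[set t : A | 0 < 0]| = 0.
Proof. have -> : [set t : A | 0 < 0] = set0 by apply/setP => t; rewrite !inE. by rewrite cards0. Qed.

Lemma card_tpost_inl p : #|tpost NT (inl p)| = #|tpost N p|.
Proof.
rewrite [tpost NT _]/tpost card_sumset.
case: (pairP p) => [[x <-]|Hn].
  rewrite tpost_pair cards1.
  have -> : [set a | 0 < pre NT (inl (val x).1) (inl a)] = [set a | 0 < 0].
    apply/setP => t; rewrite !inE preE thetaPair_fst; case: eqVneq => // ne.
    by rewrite pre_pair_other.
  have -> : [set b | 0 < pre NT (inl (val x).1) (inr b)] = [set b | 0 < (b == x)].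
    apply/setP => y; rewrite !inE preE; case: (eqVneq y x) => [->|ne].
      by rewrite eqxx pre_pair_pos.
    have ne1 : (val y).1 != (val x).1 by apply/contra_neq: ne; exact: pair_inj.
    by rewrite (negbTE ne1).
  by rewrite card_0 card_eq1'.
have -> : [set b | 0 < pre NT (inl p) (inr b)] = [set b | 0 < 0].
  by apply/setP => y; rewrite !inE preE (negbTE (Hn y)).
rewrite card_0 addn0.
have -> : [set a | 0 < pre NT (inl p) (inl a)] = tpost N p.
  by apply/setP => t; rewrite !inE preE thetaPair_nopair.
by [].
Qed.

Lemma card_tpre_inl p : #|tpre NT (inl p)| = #|tpre N p|.
Proof.
rewrite [tpre NT _]/tpre card_sumset.
have -> : [set b | 0 < post NT (inr b) (inl p)] = [set b | 0 < 0].
  by apply/setP => y; rewrite !inE postE.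
rewrite card_0 addn0.
have -> : [set a | 0 < post NT (inl a) (inl p)] = tpre N p.
  by apply/setP => t; rewrite !inE postE.
by [].
Qed.

Lemma card_tpost_inr y : #|tpost NT (inr y)| = 1.
Proof.
case: y => x []; rewrite /tpost card_sumset.
  have -> : [set a | 0 < pre NT (inr (x, true)) (inl a)] = [set a | 0 < 0].
    by apply/setP => t; rewrite !inE preE.
  have -> : [set b | 0 < pre NT (inr (x, true)) (inr b)] = [set b | 0 < (x == b)].
    by apply/setP => t; rewrite !inE preE.
  by rewrite card_0 card_eq1.
have -> : [set b | 0 < pre NT (inr (x, false)) (inr b)] = [set b | 0 < 0].
  by apply/setP => t; rewrite !inE preE.
have -> : [set a | 0 < pre NT (inr (x, false)) (inl a)] = [set a | 0 < ((val x).2 == a)].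
  by apply/setP => t; rewrite !inE preE.
by rewrite card_0 card_eq1.
Qed.

Lemma card_tpre_inr y : #|tpre NT (inr y)| = 1.
Proof.
case: y => x []; rewrite /tpre card_sumset.
  have -> : [set b | 0 < post NT (inr b) (inr (x, true))] = [set b | 0 < 0].
    by apply/setP => t; rewrite !inE postE.
  have -> : [set a | 0 < post NT (inl a) (inr (x, true))] = [set a | 0 < ((val x).2 == a)].
    by apply/setP => t; rewrite !inE postE.
  by rewrite card_0 card_eq1.
have -> : [set a | 0 < post NT (inl a) (inr (x, false))] = [set a | 0 < 0].
  by apply/setP => t; rewrite !inE postE.
have -> : [set b | 0 < post NT (inr b) (inr (x, false))] = [set b | 0 < (b == x)].
  by apply/setP => t; rewrite !inE postE.
by rewrite card_0 card_eq1'.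
Qed.

Lemma shared_inl p : shared NT (inl p) = shared N p.
Proof. by rewrite /shared card_tpost_inl. Qed.
Lemma shared_inr y : shared NT (inr y) = false.
Proof. by rewrite /shared card_tpost_inr. Qed.

Lemma is1S_th : is1S N -> is1S NT.
Proof.
rewrite /is1S card_sumset.
have -> : [set b | shared NT (inr b)] = [set b | 0 < 0].
  by apply/setP => y; rewrite !inE shared_inr.
rewrite card_0 addn0.
have -> : [set a | shared NT (inl a)] = [set p | shared N p].
  by apply/setP => p; rewrite !inE shared_inl.
by [].
Qed.

Lemma pre_inr_le1 y u : pre NT (inr y) u <= 1.
Proof. by case: y => x [] ; case: u => [t|z]; rewrite preE ?leq_b1. Qed.

Lemma pre_pair_only (x : TPN) u : 0 < pre NT (inl (val x).1) u -> u = inr x.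
Proof.
case: u => [t|y]; rewrite preE.
  rewrite thetaPair_fst; case: eqVneq => // ne; by rewrite pre_pair_other.
case: (eqVneq (val y).1 (val x).1) => [E|//]; by rewrite (pair_inj E).
Qed.

Lemma homog_th : homogeneous N -> homogeneous NT.
Proof.
move=> Hh q u u'; case: q => [p|y].
  case: (pairP p) => [[x <-]|Hn].
    by move=> /pre_pair_only -> /pre_pair_only ->.
  case: u => [t|z]; rewrite preE ?(negbTE (Hn z)) //.
  case: u' => [t'|z]; rewrite preE ?(negbTE (Hn z)) // !thetaPair_nopair //.
  exact: Hh.
move=> H1 H2; have := pre_inr_le1 y u; have := pre_inr_le1 y u'; move: H1 H2; lia.
Qed.

Lemma h1s_th : h1s_wmg N -> h1s_wmg NT.
Proof.
case=> Hh H1 H2; split; [exact: homog_th | exact: is1S_th |].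
case=> [p|y].
  by rewrite shared_inl card_tpre_inl card_tpost_inl; exact: H2.
by rewrite card_tpre_inr card_tpost_inr.
Qed.

Lemma connect_map (A B : finType) (e : rel A) (e' : rel B) (f : A -> B) :
  (forall a b, e a b -> connect e' (f a) (f b)) ->
  forall a b, connect e a b -> connect e' (f a) (f b).
Proof.
move=> H a b /connectP [p Hp ->]; elim: p a Hp => [|c p IH] a /=; first by move=> _; exact: connect0.
case/andP => eac Hp; exact: connect_trans (H _ _ eac) (IH _ Hp).
Qed.

Definition emb (z : P + T) : PTh N + TTh N :=
  match z with inl p => inl (inl p) | inr t => inr (inl t) end.

Lemma keep_emb z : keep NT (emb z) = keep N z.
Proof. by case: z => [p|t] //=; rewrite shared_inl. Qed.

Lemma keep_new y : keep NT (inl (inr y)) = true.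
Proof. by rewrite /= shared_inr. Qed.

Lemma edge_pt (Q U : finType) (K : pnet Q U) p t : edge K (inl p) (inr t) = (0 < pre K p t).
Proof. by []. Qed.
Lemma edge_tp (Q U : finType) (K : pnet Q U) p t : edge K (inr t) (inl p) = (0 < post K t p).
Proof. by []. Qed.

Lemma del_edge a b : edge_del NT a b -> edge NT a b.
Proof. by case/and3P. Qed.

Lemma mk_del a b : keep NT a -> keep NT b -> edge NT a b -> edge_del NT a b.
Proof. by move=> Ha Hb He; rewrite /edge_del Ha Hb He. Qed.

Lemma cyc1 x : edge_del NT (inr (inl (val x).2)) (inl (inr (x, true))).
Proof. by apply: mk_del; rewrite ?keep_new // edge_tp postE eqxx. Qed.
Lemma cyc2 x : edge_del NT (inl (inr (x, true))) (inr (inr x)).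
Proof. by apply: mk_del; rewrite ?keep_new // edge_pt preE eqxx. Qed.
Lemma cyc3 x : edge_del NT (inr (inr x)) (inl (inr (x, false))).
Proof. by apply: mk_del; rewrite ?keep_new // edge_tp postE eqxx. Qed.
Lemma cyc4 x : edge_del NT (inl (inr (x, false))) (inr (inl (val x).2)).
Proof. by apply: mk_del; rewrite ?keep_new // edge_pt preE eqxx. Qed.

Lemma node_del z : keep NT z -> exists a, [/\ keep N a,
  connect (edge_del NT) z (emb a) & connect (edge_del NT) (emb a) z].
Proof.
case: z => [[p|[x b]]|[t|x]] Hk.
- by exists (inl p); rewrite -keep_emb; split=> //; exact: connect0.
- exists (inr (val x).2); clear Hk; split=> //=.
    case: b.
      apply: connect_trans (connect1 (cyc2 x)) _.
      apply: connect_trans (connect1 (cyc3 x)) _.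
      exact: connect1 (cyc4 x).
    exact: connect1 (cyc4 x).
  case: b.
    exact: connect1 (cyc1 x).
  apply: connect_trans (connect1 (cyc1 x)) _.
  apply: connect_trans (connect1 (cyc2 x)) _.
  exact: connect1 (cyc3 x).
- by exists (inr t); split=> //; exact: connect0.
- exists (inr (val x).2); split=> //=.
    apply: connect_trans (connect1 (cyc3 x)) _.
    exact: connect1 (cyc4 x).
  apply: connect_trans (connect1 (cyc1 x)) _.
  exact: connect1 (cyc2 x).
Qed.

Lemma emb_edge_gen a b : keep N a -> keep N b -> edge N a b -> connect (edge_del NT) (emb a) (emb b).
Proof.
case: a => [p|t]; case: b => [p'|t'] //= Ka Kb He.
  case Hp: (thetaPair N (p, t')).
    pose x : TPN := exist _ (p, t') Hp.
    have E1 : edge_del NT (inl (inl p)) (inr (inr x)).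
      apply: mk_del; [by rewrite /= shared_inl | by [] | by rewrite edge_pt preE /= eqxx].
    apply: connect_trans (connect1 E1) _.
    apply: connect_trans (connect1 (cyc3 x)) _.
    exact: connect1 (cyc4 x).
  apply: connect1; apply: mk_del; [by rewrite /= shared_inl | by [] | by rewrite edge_pt preE Hp].
apply: connect1; apply: mk_del; [by [] | by rewrite /= shared_inl | by rewrite edge_tp postE].
Qed.

Lemma emb_edge_full a b : edge N a b -> connect (edge NT) (emb a) (emb b).
Proof.
case: a => [p|t]; case: b => [p'|t'] //= He.
  case Hp: (thetaPair N (p, t')).
    pose x : TPN := exist _ (p, t') Hp.
    have E1 : edge NT (inl (inl p)) (inr (inr x)) by rewrite edge_pt preE /= eqxx.
    apply: connect_trans (connect1 E1) _.
    apply: connect_trans (connect1 (del_edge (cyc3 x))) _.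
    exact: connect1 (del_edge (cyc4 x)).
  by apply: connect1; rewrite /edge preE Hp.
by apply: connect1; rewrite /edge postE.
Qed.

Lemma sc_th : [/\ h1s_wmg N, strongly_connected N & del_strongly_connected N] ->
  [/\ h1s_wmg NT, strongly_connected NT & del_strongly_connected NT].
Proof.
case=> Hh Hs Hd; split; first exact: h1s_th.
  move=> X Y.
  have keepsub : subrel (edge_del NT) (connect (edge NT)) by move=> u v /del_edge /connect1.
  have node : forall z, exists a, connect (edge NT) z (emb a) /\ connect (edge NT) (emb a) z.
    case=> [[p|y]|[t|x]].
    - by exists (inl p); split; exact: connect0.
    - have [a [_ H1 H2]] := node_del (keep_new y).
      by exists a; split; apply: connect_sub keepsub _ _ _.
    - by exists (inr t); split; exact: connect0.
    - have [a [_ H1 H2]] := node_del (z := inr (inr x)) isT.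
      by exists a; split; apply: connect_sub keepsub _ _ _.
  have [a [Ha _]] := node X; have [b [_ Hb]] := node Y.
  apply: connect_trans Ha _; apply: connect_trans _ Hb.
  apply: connect_map (Hs a b); exact: emb_edge_full.
move=> X Y KX KY.
have [a [Ka Ha _]] := node_del KX; have [b [Kb _ Hb]] := node_del KY.
apply: connect_trans Ha _; apply: connect_trans _ Hb.
have : connect (edge_del N) a b := Hd a b Ka Kb.
apply: connect_map => u v /and3P [Ku Kv Huv]; exact: emb_edge_gen.
Qed.

End Th.

Unset Implicit Arguments.

Theorem mainTheorem8 (P T : finType) (N : pnet P T) (M0 : P -> nat)
  (ordr : {set TP N} -> seq (TP N)) (Hordr : forall A, perm_eq (ordr A) (enum A)) :
  (* (1) *)
  ((is1S N -> is1S (thetaNet N)) /\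
   (homogeneous N -> homogeneous (thetaNet N)) /\
   (h1s_wmg N -> h1s_wmg (thetaNet N)) /\
   ([/\ h1s_wmg N, strongly_connected N & del_strongly_connected N] ->
    [/\ h1s_wmg (thetaNet N), strongly_connected (thetaNet N)
      & del_strongly_connected (thetaNet N)])) /\
  (* (2) *)
  (forall alpha : seq T, feasible N M0 alpha ->
     feasible (thetaNet N) (thetaM0 N M0) (expand N ordr alpha)) /\
  (* (3) *)
  (forall beta' : seq (TTh N), feasible (thetaNet N) (thetaM0 N M0) beta' ->
     feasible (thetaNet N) (thetaM0 N M0) (reduce N beta') /\
     exists alpha : seq T,
       [/\ feasible N M0 alpha,
           feasible (thetaNet N) (thetaM0 N M0) (expand N ordr alpha)
         & parikh (expand N ordr alpha) =1 parikh (reduce N beta')]) /\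
  (* (4) *)
  ((forall p : P, sbounded N M0 p) ->
     forall q : PTh N, sbounded (thetaNet N) (thetaM0 N M0) q) /\
  (* (5) *)
  (deadlockable (thetaNet N) (thetaM0 N M0) <-> deadlockable N M0) /\
  (* (6) *)
  (live (thetaNet N) (thetaM0 N M0) <-> live N M0).
Proof.
split.
  split; first exact: is1S_th.
  split; first exact: homog_th.
  split; first exact: h1s_th.
  exact: sc_th.
split; first by move=> alpha; exact: part2 Hordr M0 alpha.
split; first by move=> beta'; exact: part3 Hordr M0 beta'.
split; first exact: part4.
split; first exact: part5.
exact: part6.
Qed.
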